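(* Let $G$ be a graph, $h\geq 3$ a constant, $\Lambda>0$, and let $Y>0$ be any value (possibly depending on $n,h,\Lambda$). Fix a vertex $v$ with $t_G(v)\leq \Lambda/Y$ and a vector $P\in\mathsf{Product}_h(\Lambda)$. Then $v[P]\leq \frac{q}{Y}$, where $q=\frac{h!}{h^h}$.
   Context: An $h$-cycle is a cycle on $h$ distinct vertices; $t_G(v)$ is the number of $h$-cycles of $G$ containing $v$. Logarithms are base 2. $\mathsf{Product}_h(\Lambda)$ is the set of vectors $(p_1,\dots,p_h)\in[0,1]^h$ such that each $p_i\in\{2^{-j}: j \text{ an integer}, 0\leq j\leq \log(\Lambda)+1\}$ and $\prod_{i=1}^h p_i\leq 1/\Lambda$. For $P=(p_1,\dots,p_h)$, the $P$-discovery experiment is: sample a uniformly random coloring $\varphi:V(G)\to[h]$, keep each vertex of color class $i$ independently with probability $p_i$, and let $F$ be the induced subgraph on kept vertices; $v$ is $P$-discovered if $v$ lies on an $h$-cycle of $F$ whose vertices receive $h$ distinct colors. $v[P]$ is the probability that $v$ is $P$-discovered. *)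

(* Defs.v *)
From HB Require Import structures.
From mathcomp Require Import all_boot all_order all_algebra.
From mathcomp Require Import reals exp.
Set Implicit Arguments. Unset Strict Implicit. Unset Printing Implicit Defensive.
Import Order.TTheory GRing.Theory Num.Theory.
Local Open Scope ring_scope.

Section Defs.
Variables (V : finType) (G : rel V) (h : nat).

Definition simple_graph := symmetric G /\ irreflexive G.

Definition hcycles : {set {set {set V}}} :=
  [set E : {set {set V}} | [exists f : {ffun 'I_h -> V},
      [&& injectiveb f, [forall i, G (f i) (f (ordS i))]
        & E == [set [set f i; f (ordS i)] | i : 'I_h]]]].

Definition tG (v : V) : nat :=
  #|[set E in hcycles | v \in \bigcup_(e in E) e]|.

(* v is P-discovered for coloring phi and kept vertex set S:
   v lies on an h-cycle of F = G[S] whose vertices get h distinct colors *)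
Definition discovered (v : V) (phi : {ffun V -> 'I_h}) (S : {set V}) : bool :=
  [exists f : {ffun 'I_h -> V},
     [&& injectiveb f, v \in codom f, [forall i, f i \in S],
         [forall i, G (f i) (f (ordS i))]
       & injectiveb [ffun i => phi (f i)]]].

Variable R : realType.

Definition log2 (x : R) : R := ln x / ln 2.

Definition Product (Lambda : R) (P : {ffun 'I_h -> R}) : Prop :=
  (forall i, exists j : nat,
      P i = (2%:R ^+ j)^-1 /\ (j%:R <= log2 Lambda + 1)) /\
  \prod_(i < h) P i <= 1 / Lambda.

Definition discovery_prob (P : {ffun 'I_h -> R}) (v : V) : R :=
  \sum_(phi : {ffun V -> 'I_h}) \sum_(S : {set V})
    ((h ^ #|V|)%:R)^-1 *
    ((\prod_(x in S) P (phi x)) * (\prod_(x in ~: S) (1 - P (phi x)))) *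
    (discovered v phi S)%:R.

End Defs.

(* Main.v *)
Require Import Defs.
From HB Require Import structures.
From mathcomp Require Import all_boot all_order all_algebra.
From mathcomp Require Import reals exp.
Import Order.TTheory GRing.Theory Num.Theory.
Local Open Scope ring_scope.
From mathcomp Require Import ring.
Lemma sumS_sub (R : realType) (V : finType) (a : V -> R) (W : {set V}) :
  \sum_(S : {set V}) (\prod_(x in S) a x * \prod_(x in ~: S) (1 - a x)) * (W \subset S)%:R
  = \prod_(x in W) a x.
Proof.
have -> : \prod_(x in W) a x = \prod_x (a x + (if x \in W then 0 else 1 - a x)).
  rewrite big_mkcond /=; apply: eq_bigr => x _; case: ifP => _; rewrite ?addr0 //.
  by rewrite addrC subrK.
rewrite bigA_distr; apply: eq_bigr => S _.
case: (boolP (W \subset S)) => HW.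
- rewrite mulr1 [RHS](bigID (mem S)) /=; congr (_ * _).
    by apply: eq_bigr => x xS; rewrite xS.
  apply: eq_big => [x|x]; first by rewrite inE.
  move=> xS; rewrite inE in xS; rewrite (negbTE xS); case: ifP => // xW.
  by move: xS; rewrite (subsetP HW x xW).
- rewrite mulr0; have [x xW xS] := subsetPn HW.
  by rewrite (bigD1 x) //= (negbTE xS) xW mul0r.
Qed.

Lemma sum_comp (R : realType) (V : finType) h (f : 'I_h -> V)
  (K : {ffun 'I_h -> 'I_h} -> R) : injective f ->
  \sum_(phi : {ffun V -> 'I_h}) K [ffun i => phi (f i)]
  = (h ^ (#|V| - h))%:R * \sum_u K u.
Proof.
move=> injf.
have E1 : forall phi : {ffun V -> 'I_h}, K [ffun i => phi (f i)]
   = \sum_u K u * (\prod_i ((phi (f i) == u i)%:R : R)).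
  move=> phi; rewrite (bigD1 [ffun i => phi (f i)]) //=.
  rewrite [X in _ * X]big1 ?mulr1; last by move=> i _; rewrite ffunE eqxx.
  rewrite [X in _ + X]big1 ?addr0 //.
  move=> u hu; case: (pickP (fun i => phi (f i) != u i)) => [i Hi|Hall].
    by rewrite (bigD1 i) //= (negbTE Hi) mul0r mulr0.
  case/negP: hu; apply/eqP/ffunP => i; rewrite ffunE.
  by have := Hall i => /negbFE/eqP ->.
rewrite (eq_bigr _ (fun phi _ => E1 phi)) exchange_big /= mulr_sumr.
apply: eq_bigr => u _; rewrite -big_distrr /= mulrC; congr (_ * _).
pose c (x : V) (j : 'I_h) : R := \prod_(i | f i == x) (j == u i)%:R.
have E2 : forall phi : {ffun V -> 'I_h},
    \prod_i ((phi (f i) == u i)%:R : R) = \prod_x c x (phi x).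
  move=> phi; rewrite (partition_big f predT) //=; apply: eq_bigr => x _.
  by apply: eq_bigr => i /eqP <-.
rewrite (eq_bigr _ (fun phi _ => E2 phi)) -bigA_distr_bigA /=.
have E3 : forall x, \sum_j c x j = if x \in codom f then 1 else h%:R.
  move=> x; case: (boolP (x \in codom f)) => [/codomP [i ->]|nx].
    rewrite (bigD1 (u i)) //= [X in _ + X]big1 ?addr0.
      by rewrite /c (big_pred1 i) ?eqxx // => i'; rewrite (inj_eq injf).
    move=> j /negbTE nj; rewrite /c (big_pred1 i) ?nj // => i'.
    by rewrite (inj_eq injf).
  rewrite (eq_bigr (fun _ => 1)).
    by rewrite sumr_const card_ord.
  move=> j _; rewrite /c big_pred0 // => i; apply/eqP => fx; apply: (negP nx).
  by rewrite -fx codom_f.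
rewrite (eq_bigr _ (fun x _ => E3 x)) (bigID (mem (codom f))) /= big1; last first.
  by move=> x ->.
rewrite mul1r (eq_bigr (fun _ => h%:R)); last by move=> x /negbTE ->.
rewrite prodr_const natrX; congr (_ ^+ _).
rewrite -(cardC (mem (codom f))) (card_codom injf) card_ord addKn.
by apply: eq_card => x; rewrite !inE.
Qed.

Lemma sum_inj (R : realType) h (P : {ffun 'I_h -> R}) :
  \sum_(u : {ffun 'I_h -> 'I_h}) (injectiveb u)%:R * \prod_i P (u i)
  = (h`!)%:R * \prod_i P i.
Proof.
rewrite (eq_bigr (fun u : {ffun 'I_h -> 'I_h} => (injectiveb u)%:R * \prod_i P i)); last first.
  move=> u _; case: (boolP (injectiveb u)) => [/injectiveP iu|]; last by rewrite !mul0r.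
  by rewrite [X in _ = _ * X](reindex_inj iu).
rewrite -big_distrl /=; congr (_ * _).
have -> : \sum_(u : {ffun 'I_h -> 'I_h}) ((injectiveb u)%:R : R)
   = \sum_(u : {ffun 'I_h -> 'I_h} | injectiveb u) 1.
  by rewrite [RHS]big_mkcond; apply: eq_bigr => u _; case: injectiveb.
rewrite sumr_const -ffactnn.
have := card_inj_ffuns 'I_h 'I_h; rewrite card_ord => <-.
by rewrite cardsE.
Qed.

Lemma bigcup_cyc (V : finType) h (f : 'I_h -> V) :
  \bigcup_(e in [set [set f i; f (ordS i)] | i : 'I_h]) e = f @: [set: 'I_h].
Proof.
apply/setP => x; apply/bigcupP/imsetP.
- case=> e /imsetP [i _ ->] /set2P [->|->]; [exists i | exists (ordS i)] => //.
- case=> i _ ->; exists [set f i; f (ordS i)]; last by rewrite set21.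
  by apply/imsetP; exists i.
Qed.

Theorem proposition3 (R : realType) (V : finType) (G : rel V) (h : nat)
  (Lambda Y : R) (v : V) (P : {ffun 'I_h -> R}) :
  simple_graph G -> (3 <= h)%N -> 0 < Lambda -> 0 < Y ->
  (tG G h v)%:R <= Lambda / Y ->
  Product Lambda P ->
  discovery_prob G P v <= (h`!)%:R / (h ^ h)%:R / Y.
Proof.
move=> _ h3 Lpos Ypos HT [HP Hprod].
have P01 : forall i, 0 <= P i <= 1.
  move=> i; have [j [-> _]] := HP i.
  have h2 : 0 < (2%:R : R) ^+ j by apply: exprn_gt0.
  rewrite invr_ge0 (ltW h2) /= invf_le1 //.
  by apply: exprn_ege1; rewrite ler1n.
set c : R := ((h ^ #|V|)%:R)^-1.
have c0 : 0 <= c by rewrite invr_ge0 ler0n.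
set T := [set E in hcycles G h | v \in \bigcup_(e in E) e].
pose cyc (E : {set {set V}}) (f : {ffun 'I_h -> V}) :=
  [&& injectiveb f, [forall i, G (f i) (f (ordS i))]
        & E == [set [set f i; f (ordS i)] | i : 'I_h]].
pose A (E : {set {set V}}) (phi : {ffun V -> 'I_h}) (S : {set V}) :=
  if [pick f | cyc E f] is Some f then
    injectiveb [ffun i => phi (f i)] && [forall i, f i \in S] else false.
set q : R := (h`!)%:R / (h ^ h)%:R.
have q0 : 0 <= q by rewrite divr_ge0 ?ler0n.
have Pi0 : 0 <= \prod_i P i by apply: prodr_ge0 => i _; case/andP: (P01 i).
have step1 : forall phi S, ((discovered G v phi S)%:R : R)
    <= \sum_(E in T) (A E phi S)%:R.
  move=> phi S; case: (boolP (discovered G v phi S)) => [|_]; last first.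
    by rewrite /= sumr_ge0 // => E _; rewrite ler0n.
  case/existsP => g /and5P [injg vg gS gcyc injpg].
  set E := [set [set g i; g (ordS i)] | i : 'I_h].
  have cycg : cyc E g by rewrite /cyc injg gcyc eqxx.
  have ET : E \in T.
    rewrite inE; apply/andP; split.
      by rewrite inE; apply/existsP; exists g.
    rewrite bigcup_cyc; case/codomP: vg => i ->; exact: imset_f.
  rewrite (bigD1 E) //=.
  apply: (@le_trans _ _ ((A E phi S)%:R)); last first.
    by rewrite lerDl; apply: sumr_ge0 => E' _; rewrite ler0n.
  rewrite ler1n lt0b /A; case: pickP => [f cycf|none]; last by have := none g; rewrite cycg.
  case/and3P: cycf => /injectiveP injf _ /eqP Ef.
  have Deq : f @: [set: 'I_h] = g @: [set: 'I_h] by rewrite -bigcup_cyc -Ef bigcup_cyc.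
  have inG : forall i, exists i', f i = g i'.
    move=> i; have : f i \in g @: [set: 'I_h] by rewrite -Deq imset_f.
    by case/imsetP => i' _ ->; exists i'.
  apply/andP; split.
    apply/injectiveP => i j; rewrite !ffunE => e.
    have [i' fi] := inG i; have [j' fj] := inG j.
    rewrite fi fj in e; apply: injf; rewrite fi fj.
    move/injectiveP: injpg => ip.
    by have := ip i' j'; rewrite !ffunE => /(_ e) ->.
  apply/forallP => i; have [i' ->] := inG i.
  by move/forallP: gS.
pose w (phi : {ffun V -> 'I_h}) (S : {set V}) :=
  c * (\prod_(x in S) P (phi x) * \prod_(x in ~: S) (1 - P (phi x))).
have w0 : forall phi S, 0 <= w phi S.
  move=> phi S; apply: mulr_ge0 => //; apply: mulr_ge0; apply: prodr_ge0 => x _.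
    by case/andP: (P01 (phi x)).
  by rewrite subr_ge0; case/andP: (P01 (phi x)).
have step2 : forall E, E \in T ->
    \sum_(phi : {ffun V -> 'I_h}) \sum_(S : {set V}) w phi S * (A E phi S)%:R
    = q * \prod_i P i.
  move=> E; rewrite inE => /andP [Eh _]; rewrite inE in Eh.
  case/existsP: Eh => f0 cf0.
  rewrite /A; case: pickP => [f cycf|none]; last by have := none f0; rewrite /= /cyc cf0.
  case/and3P: cycf => /injectiveP injf _ _.
  have sub : forall S : {set V}, [forall i, f i \in S] = (f @: [set: 'I_h] \subset S).
    move=> S; apply/idP/idP => [/forallP H | /subsetP H].
      by apply/subsetP => x /imsetP [i _ ->]; exact: H.
    by apply/forallP => i; apply: H; exact: imset_f.
  have E1 : forall phi : {ffun V -> 'I_h},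
      \sum_(S : {set V}) w phi S * (injectiveb [ffun i => phi (f i)] && [forall i, f i \in S])%:R
      = c * ((injectiveb [ffun i => phi (f i)])%:R * \prod_i P (phi (f i))).
    move=> phi; rewrite /w.
    rewrite [LHS](eq_bigr (fun S : {set V} => (c * (injectiveb [ffun i => phi (f i)])%:R) * ((\prod_(x in S) P (phi x) * \prod_(x in ~: S) (1 - P (phi x))) * (f @: [set: 'I_h] \subset S)%:R))); last by move=> S _; rewrite sub -mulnb natrM mulrACA.
    rewrite -big_distrr /= (sumS_sub _ _ (fun x => P (phi x))).
    rewrite big_imset /=; last by move=> i j _ _; apply: injf.
    rewrite -mulrA; congr (_ * (_ * _)); apply: eq_bigl => i; by rewrite in_setT.
  rewrite (eq_bigr _ (fun phi _ => E1 phi)) -big_distrr /=.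
  pose K (u : {ffun 'I_h -> 'I_h}) : R := (injectiveb u)%:R * \prod_i P (u i).
  rewrite (eq_bigr (fun phi : {ffun V -> 'I_h} => K [ffun i => phi (f i)])); last first.
    by move=> phi _; rewrite /K; congr (_ * _); apply: eq_bigr => i _; rewrite ffunE.
  rewrite sum_comp // sum_inj.
  have hV : (h <= #|V|)%N.
    by rewrite -{1}(card_ord h) -(card_codom injf) max_card.
  have eV : (h ^ #|V| = h ^ (#|V| - h) * h ^ h)%N by rewrite -expnD subnK.
  have h0 : (0 < h)%N by apply: leq_trans h3.
  rewrite /c /q eV natrM; field.
  by rewrite !pnatr_eq0 !expn_eq0 !negb_and -!lt0n h0.
rewrite /discovery_prob.
apply: (@le_trans _ _ (\sum_(phi : {ffun V -> 'I_h}) \sum_(S : {set V})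
     w phi S * \sum_(E in T) (A E phi S)%:R)).
  apply: ler_sum => phi _; apply: ler_sum => S _.
  by apply: ler_wpM2l; [exact: w0 | exact: step1].
have eq1 : \sum_(phi : {ffun V -> 'I_h}) \sum_(S : {set V})
     w phi S * \sum_(E in T) (A E phi S)%:R
  = \sum_(E in T) \sum_(phi : {ffun V -> 'I_h}) \sum_(S : {set V})
     w phi S * (A E phi S)%:R.
  rewrite [RHS]exchange_big /=; apply: eq_bigr => phi _.
  rewrite [RHS]exchange_big /=; apply: eq_bigr => S _.
  by rewrite mulr_sumr.
have eq2 : \sum_(E in T) \sum_(phi : {ffun V -> 'I_h}) \sum_(S : {set V})
     w phi S * (A E phi S)%:R = \sum_(E in T) (q * \prod_i P i).
  by apply: eq_bigr => E ET; exact: step2.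
rewrite eq1 eq2.
have HT' : (#|T|%:R : R) <= Lambda / Y := HT.
rewrite sumr_const -mulr_natr -mulrA.
apply: (@le_trans _ _ (q * (1 / Y))); last by rewrite mul1r.
apply: ler_wpM2l => //.
apply: (@le_trans _ _ (1 / Lambda * (Lambda / Y))).
  by apply: ler_pM => //; rewrite ler0n.
have -> : 1 / Lambda * (Lambda / Y) = 1 / Y.
  by field; rewrite ?gt_eqF.
by [].
Qed.
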